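(* Let $\mathbb{F}$ be a field with $\mathrm{char}(\mathbb{F})\neq 2$ and let $L$ be a finite-dimensional semisimple Lie algebra over $\mathbb{F}$. Then $b(L)\geq 2$.
   Context: For $x\in L$, $b(x)=\mathrm{rank}(\mathrm{ad}_x)$ and the breadth of $L$ is $b(L)=\max\{b(x)\mid x\in L\}$. *)

(* Defs.v *)
From HB Require Import structures.
From mathcomp Require Import all_boot all_order all_algebra.
Set Implicit Arguments. Unset Strict Implicit. Unset Printing Implicit Defensive.
Import GRing.Theory.
Local Open Scope ring_scope.

Definition is_lie_bracket (F : fieldType) (L : vectType F) (br : L -> L -> L) : Prop :=
  [/\ (forall x (a : F) u v, br x (a *: u + v) = a *: br x u + br x v),
      (forall y (a : F) u v, br (a *: u + v) y = a *: br u y + br v y),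
      (forall x, br x x = 0) &
      (forall x y z, br x (br y z) + br y (br z x) + br z (br x y) = 0)].

Definition lie_ideal (F : fieldType) (L : vectType F) (br : L -> L -> L)
  (I : {vspace L}) : Prop :=
  forall x y, y \in I -> br x y \in I.

(* [U, U] : the subspace spanned by all brackets of elements of U
   (by bilinearity, spanned by brackets of basis elements) *)
Definition lie_derived (F : fieldType) (L : vectType F) (br : L -> L -> L)
  (U : {vspace L}) : {vspace L} :=
  (<<[seq br u v | u <- vbasis U, v <- vbasis U]>>)%VS.

Definition lie_derived_series (F : fieldType) (L : vectType F) (br : L -> L -> L)
  (n : nat) (U : {vspace L}) : {vspace L} :=
  iter n (lie_derived br) U.

Definition lie_solvable (F : fieldType) (L : vectType F) (br : L -> L -> L)
  (U : {vspace L}) : Prop :=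
  exists n, lie_derived_series br n U = 0%VS.

Definition lie_semisimple (F : fieldType) (L : vectType F) (br : L -> L -> L) : Prop :=
  (fullv : {vspace L}) != 0%VS /\
  (forall I : {vspace L}, lie_ideal br I -> lie_solvable br I -> I = 0%VS).

Definition lie_ad (F : fieldType) (L : vectType F) (br : L -> L -> L) (x : L)
  : 'End(L) := linfun (br x).

Definition lie_b (F : fieldType) (L : vectType F) (br : L -> L -> L) (x : L) : nat :=
  \dim (limg (lie_ad br x)).

(* Main.v *)
From HB Require Import structures.
From Stdlib Require Import Classical_Pred_Type.
Require Import Defs.
From mathcomp Require Import all_boot all_order all_algebra.
Import GRing.Theory.
Local Open Scope ring_scope.

Section Aux.
Variables (F : fieldType) (L : vectType F) (br : L -> L -> L).
Hypothesis Hlin : forall x (a : F) u v, br x (a *: u + v) = a *: br x u + br x v.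
Variable x : L.
Definition brx := br x.
Lemma brx_lin : linear brx. Proof. by move=> a u v; apply: Hlin. Qed.
HB.instance Definition _ := GRing.isLinear.Build F L L *:%R brx brx_lin.
Lemma adE v : lie_ad br x v = br x v.
Proof. by rewrite /lie_ad -/brx lfunE. Qed.
End Aux.

Section Main.
Variables (F : fieldType) (L : vectType F) (br : L -> L -> L).
Hypothesis H : is_lie_bracket br.

Lemma br_addl u v w : br (u + v) w = br u w + br v w.
Proof. by case: H => _ H2 _ _; rewrite -[u]scale1r H2 !scale1r. Qed.

Lemma br_addr u v w : br w (u + v) = br w u + br w v.
Proof. by case: H => H1 _ _ _; rewrite -[u]scale1r H1 !scale1r. Qed.

Lemma br_0r u : br u 0 = 0.
Proof.
have := br_addr 0 0 u; rewrite addr0 => e.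
by apply/(@addrI _ (br u 0)); rewrite addr0 -e.
Qed.

Lemma br_0l u : br 0 u = 0.
Proof.
have := br_addl 0 0 u; rewrite addr0 => e.
by apply/(@addrI _ (br 0 u)); rewrite addr0 -e.
Qed.

Lemma br_Zr a u w : br w (a *: u) = a *: br w u.
Proof. by case: H => H1 _ _ _; rewrite -[a *: u]addr0 H1 br_0r addr0. Qed.

Lemma br_Zl a u w : br (a *: u) w = a *: br u w.
Proof. by case: H => _ H2 _ _; rewrite -[a *: u]addr0 H2 br_0l addr0. Qed.

Lemma br_anti u v : br u v = - br v u.
Proof.
case: H => _ _ H3 _.
have := H3 (u + v); rewrite br_addl !br_addr !H3 add0r addr0 => /eqP.
by rewrite addr_eq0 => /eqP.
Qed.

Lemma key v z : (lie_b br v <= 1)%N -> br v z != 0 ->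
  forall w, br v w \in <[br v z]>%VS.
Proof.
move=> hb hnz w.
have Hl : forall x (a : F) u v, br x (a *: u + v) = a *: br x u + br x v.
  by case: H.
have hin : forall t, br v t \in limg (lie_ad br v).
  by move=> t; rewrite -(@adE _ _ _ Hl); apply: memv_img; apply: memvf.
have : (<[br v z]> == limg (lie_ad br v))%VS.
  rewrite eqEdim -memvE hin dim_vline hnz /=.
  exact: hb.
by move/eqP => ->; apply: hin.
Qed.

End Main.
Arguments br_addl {F L br}.
Arguments br_addr {F L br}.
Arguments br_Zl {F L br}.
Arguments br_Zr {F L br}.
Arguments br_anti {F L br}.
Arguments key {F L br} H v z.


Theorem proposition2p5 (F : fieldType) (L : vectType F) (br : L -> L -> L) :
  (2%N \notin [pchar F]) ->
  is_lie_bracket br ->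
  lie_semisimple br ->
  exists x : L, (2 <= lie_b br x)%N.
Proof.
move=> _ H [Hne Hss].
apply/not_all_not_ex => Hb.
have hb : forall x, (lie_b br x <= 1)%N.
  by move=> x; have := Hb x; case: leqP.
have spanz : forall (U : {vspace L}),
    (forall a b, a \in U -> b \in U -> br a b = 0) -> lie_derived br U = 0%VS.
  move=> U hU; apply/eqP; rewrite -subv0; apply/span_subvP => w.
  case/allpairsP => [[a b] [/= ha hb' ->]].
  by rewrite memv0 hU //; apply: vbasis_mem.
have [x [z hy]] : exists x z, br x z != 0.
  apply/not_all_not_ex => hall.
  have hall' : forall a b, br a b = 0.
    by move=> a b; have := hall a; move/not_ex_all_not/(_ b)/negP; rewrite negbK => /eqP.
  move: Hne; rewrite (Hss fullv) ?eqxx // => [u v _|]; first by rewrite memvf.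
  by exists 1%N; rewrite /lie_derived_series /= spanz.
set y := br x z in hy.
have K2 : forall v, br v z \in <[y]>%VS -> br v z != 0 ->
    forall w, br v w \in <[y]>%VS.
  move=> v hvz hnz w; have := key H v z (hb v) hnz w.
  by move: hvz; rewrite memvE => /subvP; apply.
have hz : forall w, br z w \in <[y]>%VS.
  have hzx : br z x != 0 by rewrite (br_anti H) oppr_eq0.
  move=> w; have := key H z x (hb z) hzx w.
  have : br z x \in <[y]>%VS by rewrite (br_anti H) memvN memv_line.
  by rewrite memvE => /subvP; apply.
have hall : forall u w, br u w \in <[y]>%VS.
  move=> u w.
  have huz : br u z \in <[y]>%VS by rewrite (br_anti H) memvN.
  have [e|ne] := eqVneq (br u z) 0; last exact: K2.
  have h1 : br (u + x) z != 0 by rewrite (br_addl H) e add0r.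
  have h2 : br (u + x) z \in <[y]>%VS by rewrite (br_addl H) e add0r memv_line.
  have h3 : br x z != 0 by [].
  have := memvB (K2 _ h2 h1 w) (K2 _ (memv_line y) h3 w).
  by rewrite (br_addl H) addrK; apply.
have I0 : <[y]>%VS = 0%VS.
  apply: Hss; first by move=> a b _; apply: hall.
  exists 1%N; rewrite /lie_derived_series /=; apply: spanz => a b.
  case/vlineP => k -> /vlineP [m ->].
  case: (H) => _ _ H3 _.
  by rewrite (br_Zl H) (br_Zr H) H3 !scaler0.
by move: hy; have := memv_line y; rewrite I0 memv0 => ->.
Qed.
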